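(* The suboperad of $\mathrm{CNCB}$ generated by $T_{bbb}$ and $T_{bbu}$ is isomorphic to the free (nonsymmetric) operad generated by two generators of arity $2$.
   Context: For $n\ge2$, a bicoloured noncrossing configuration (BNC) of size $n$ is a regular polygon with vertices $1,\dots,n+1$ clockwise, together with disjoint sets of blue and red arcs among the arcs $(i,j)$, $1\le i<j\le n+1$. The arcs $(i,i+1)$ are the edges ($i$th edge), $(1,n+1)$ is the base, and the others are diagonals. Coloured arcs are pairwise noncrossing ($(i,j),(k,l)$ cross iff $i<k<j<l$ or $k<i<l<j$), and red arcs are diagonals. There is one BNC of size $1$, a blue segment, which is the unit. The operad $\mathrm{CNCB}$ has the BNCs as elements (arity = size). Its composition $\mathfrak C\circ_i\mathfrak D$ ($\mathfrak C$ of size $n$, $\mathfrak D$ of size $m$) glues the base of $\mathfrak D$ on the $i$th edge of $\mathfrak C$. Arcs $(a,b)$ of $\mathfrak C$ become $(\sigma(a),\sigma(b))$ with $\sigma(v)=v$ for $v\le i$ and $v+m-1$ otherwise, and arcs $(a,b)$ of $\mathfrak D$ become $(a+i-1,b+i-1)$, keeping colours. The exception is the arc $(i,i+m)$, which is red if the $i$th edge of $\mathfrak C$ and the base of $\mathfrak D$ are both uncoloured, blue if both are blue, and uncoloured otherwise. BNCs of size $2$ are triangles with vertices $1,2,3$ (no diagonals). For $x,y,z\in\{b,u\}$, $T_{xyz}$ denotes the triangle whose first edge $(1,2)$ has colour $x$, whose base $(1,3)$ has colour $y$, and whose second edge $(2,3)$ has colour $z$, where $b$ = blue and $u$ = uncoloured.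 The suboperad generated by a set is the smallest suboperad containing it. *)

(* Defs.v *)
From mathcomp Require Import all_boot.
Set Implicit Arguments. Unset Strict Implicit. Unset Printing Implicit Defensive.

Inductive colour := Blue | Red | Unc.

(** A (raw) bicoloured configuration: a size [n] and a colouring of all pairs
    of naturals; the arc (i,j) (1 <= i < j <= n+1) has colour [bcol i j].
    Canonical representation: [bcol] is [Unc] on every pair which is not an
    arc, so that Leibniz equality is equality of configurations. *)
Record bnc := BNC { bsize : nat; bcol : nat -> nat -> colour }.

Definition is_arc (n i j : nat) : bool := (1 <= i) && (i < j) && (j <= n.+1).
Definition crossing (i j k l : nat) : bool :=
  ((i < k) && (k < j) && (j < l)) || ((k < i) && (i < l) && (l < j)).

(** Well-formedness: the BNCs of the paper (not needed in the statement, since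
    the generated suboperad only contains BNCs; kept for documentation). *)
Definition is_bnc (C : bnc) : Prop :=
  let n := bsize C in
  [/\ 1 <= n,
      (forall i j, bcol C i j <> Unc -> is_arc n i j),
      (forall i j, bcol C i j = Red -> j != i.+1 /\ ~ (i == 1 /\ j == n.+1)),
      (forall i j k l, bcol C i j <> Unc -> bcol C k l <> Unc -> ~~ crossing i j k l)
    & (n = 1 -> bcol C 1 2 = Blue)].

Definition bunit : bnc :=
  BNC 1 (fun x y => if (x == 1) && (y == 2) then Blue else Unc).

(** Triangles T_xyz: first edge (1,2) colour x, base (1,3) colour y,
    second edge (2,3) colour z. *)
Definition triangle (x y z : colour) : bnc :=
  BNC 2 (fun a b =>
           if (a == 1) && (b == 2) then x
           else if (a == 1) && (b == 3) then y
           else if (a == 2) && (b == 3) then z else Unc).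

Definition T_bbb := triangle Blue Blue Blue.
Definition T_bbu := triangle Blue Blue Unc.

(** Colour of the arc (i, i+m) in C o_i D, from the colour [e] of the i-th
    edge of C and the colour [b] of the base of D. *)
Definition glue_colour (e b : colour) : colour :=
  match e, b with
  | Unc, Unc => Red
  | Blue, Blue => Blue
  | _, _ => Unc
  end.

(** Partial composition C o_i D (meaningful for 1 <= i <= size C).
    Vertex v of C goes to sigma v = v (v <= i), v+m-1 (v > i); vertex a of D
    goes to a+i-1.  We compute the colour of a result arc (x,y) by inverting
    these maps. *)
Definition bcomp (C : bnc) (i : nat) (D : bnc) : bnc :=
  let n := bsize C in
  let m := bsize D in
  let in_img v := (v <= i) || (i + m <= v) in
  let sinv v := if v <= i then v else v - m + 1 in
  BNC (n + m - 1)
    (fun x y =>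
       if (x == i) && (y == i + m) then
         glue_colour (bcol C i i.+1) (bcol D 1 m.+1)
       else if (i <= x) && (y <= i + m) then bcol D (x - i + 1) (y - i + 1)
       else if in_img x && in_img y then bcol C (sinv x) (sinv y)
       else Unc).

Inductive gen_bbb_bbu : bnc -> Prop :=
  | gen_unit : gen_bbb_bbu bunit
  | gen_bbb : gen_bbb_bbu T_bbb
  | gen_bbu : gen_bbb_bbu T_bbu
  | gen_comp C D i : gen_bbb_bbu C -> gen_bbb_bbu D ->
      1 <= i <= bsize C -> gen_bbb_bbu (bcomp C i D).

(** The free nonsymmetric operad on two binary generators (labelled by a
    boolean): planar binary trees with bicoloured internal nodes; arity =
    number of leaves; unit = the leaf; o_i = grafting on the i-th leaf. *)
Inductive tree := Leaf | Node of bool & tree & tree.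

Fixpoint arity (t : tree) : nat :=
  match t with Leaf => 1 | Node _ l r => arity l + arity r end.

Fixpoint graft (t : tree) (i : nat) (s : tree) : tree :=
  match t with
  | Leaf => if i == 1 then s else Leaf
  | Node c l r =>
      if i <= arity l then Node c (graft l i s) r
      else Node c l (graft r (i - arity l) s)
  end.

(* Main.v *)
Require Import Defs.
From mathcomp Require Import all_boot zify.
From Stdlib Require Import FunctionalExtensionality.

Definition bc (b : bool) := if b then Blue else Unc.

Fixpoint inner (t : tree) (x y : nat) : colour :=
  match t with
  | Leaf => Unc
  | Node c l r =>
    if y <= (arity l).+1 then
      (if (x == 1) && (y == (arity l).+1) then bc true else inner l x y)
    else
      (if (x - arity l == 1) && (y - arity l == (arity r).+1) then bc c
       else inner r (x - arity l) (y - arity l))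
  end.

Definition colc (b : bool) (t : tree) (x y : nat) :=
  if (x == 1) && (y == (arity t).+1) then bc b else inner t x y.

Lemma colc_node b c l r x y :
  colc b (Node c l r) x y =
  if (x == 1) && (y == (arity l + arity r).+1) then bc b
  else if y <= (arity l).+1 then colc true l x y
  else colc c r (x - arity l) (y - arity l).
Proof. by []. Qed.

Lemma colc_leaf b x y : colc b Leaf x y = if (x == 1) && (y == 2) then bc b else Unc.
Proof. by []. Qed.

Lemma arity_gt0 t : 0 < arity t.
Proof. elim: t => //= c l IHl r IHr. lia. Qed.

Lemma colc_out b t x y : (x < 1 \/ y <= x \/ arity t + 1 < y) -> colc b t x y = Unc.
Proof.
elim: t b x y => [|c l IHl r IHr] b x y H.
  rewrite colc_leaf; case: ifP => //= E; simpl in H; lia.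
have := arity_gt0 l; have := arity_gt0 r => Hr Hl.
rewrite colc_node /=; case: ifP => E1; first (simpl in H; lia).
case: ifP => E2; [apply: IHl | apply: IHr]; simpl in H; lia.
Qed.

Lemma colc_base b t x y : x = 1 -> y = arity t + 1 -> colc b t x y = bc b.
Proof. move=> -> ->. by rewrite /colc addn1 !eqxx. Qed.

Lemma arity_graft t i s : 1 <= i <= arity t -> arity (graft t i s) = arity t + arity s - 1.
Proof.
elim: t i => [|c l IHl r IHr] i /= H.
  have -> : i = 1 by lia. rewrite eqxx; lia.
have := arity_gt0 l; have := arity_gt0 r; have := arity_gt0 s => Hs Hr Hl.
case: ifP => E /=.
  rewrite IHl; lia.
rewrite IHr; lia.
Qed.

Definition comp (C : nat -> nat -> colour) (i m : nat) (D : nat -> nat -> colour) (x y : nat) :=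
  let in_img v := (v <= i) || (i + m <= v) in
  let sinv v := if v <= i then v else v - m + 1 in
  if (x == i) && (y == i + m) then C i i.+1
  else if (i <= x) && (y <= i + m) then D (x - i + 1) (y - i + 1)
  else if in_img x && in_img y then C (sinv x) (sinv y)
  else Unc.

Arguments colc : simpl never.
Arguments comp : simpl never.

Ltac split_if :=
  match goal with |- context [if ?b then _ else _] =>
    lazymatch b with
    | context [if _ then _ else _] => fail
    | true => fail
    | false => fail
    | _ => let E := fresh "E" in case E: b
    end
  end.

Lemma colc_congr b b' t x1 y1 x2 y2 : x1 = x2 -> y1 = y2 ->
  (b = b' \/ ~ (x1 = 1 /\ y1 = arity t + 1)) -> colc b t x1 y1 = colc b' t x2 y2.
Proof.
move=> <- <- [<- //|H]. rewrite /colc; case: ifP => // E.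
exfalso; apply: H; move/andP: E => [/eqP -> /eqP ->]; lia.
Qed.

Lemma colc_dec (b : bool) (t : tree) (x y : nat) :
  (x < 1 \/ y <= x \/ arity t + 1 < y) \/ (1 <= x /\ x < y /\ y <= arity t + 1).
Proof. lia. Qed.

Ltac fin0 :=
  try (rewrite [LHS]colc_out; [|simpl; lia]);
  try (rewrite [RHS]colc_out; [|simpl; lia]);
  try (rewrite [LHS]colc_base; [| simpl; lia | simpl; lia]);
  try (rewrite [RHS]colc_base; [| simpl; lia | simpl; lia]);
  first [ reflexivity
        | apply: colc_congr; [lia | lia | first [left; reflexivity | right; simpl; lia]] ].

Ltac fin := first [ fin0
  | match goal with |- colc ?b ?t ?x ?y = _ => case: (colc_dec b t x y) => ?; fin0 end
  | match goal with |- _ = colc ?b ?t ?x ?y => case: (colc_dec b t x y) => ?; fin0 end ].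

Ltac crunch := repeat (split_if; try (exfalso; lia)); fin.


Lemma comp_shift C i m D x y k :
  comp C (k + i) m D (k + x) (k + y) = comp (fun a b => C (k + a) (k + b)) i m D x y.
Proof.
rewrite /comp /= !eqn_add2l -!addnA eqn_add2l !leq_add2l.
have -> : k + x - (k + i) = x - i by rewrite subnDl.
have -> : k + y - (k + i) = y - i by rewrite subnDl.
repeat (split_if; try (exfalso; lia)); try reflexivity;
  (f_equal; lia).
Qed.

Lemma comp_ext C C' i m D x y : 1 <= i -> 1 <= x ->
  (forall a b, 1 <= a -> C a b = C' a b) -> comp C i m D x y = comp C' i m D x y.
Proof.
move=> Hi Hx H; rewrite /comp /=.
rewrite H //.
repeat (split_if; try (exfalso; lia)); try reflexivity; rewrite H //; lia.
Qed.

Lemma comp_out C i m D x y : 0 < m -> (forall a b, b <= a -> C a b = Unc) ->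
  (forall a b, b <= a -> D a b = Unc) -> y <= x -> comp C i m D x y = Unc.
Proof.
move=> Hm HC HD Hxy; rewrite /comp /=.
repeat (split_if; try (exfalso; lia)); try reflexivity;
  first [rewrite HC //; lia | rewrite HD //; lia].
Qed.

Lemma colc_shift b c l r a z : 1 <= a ->
  colc b (Node c l r) (arity l + a) (arity l + z) = colc c r a z.
Proof.
move=> Ha; have := arity_gt0 l => Hl.
rewrite colc_node.
case: ifP => E1; first (exfalso; lia).
case: ifP => E2.
  rewrite colc_out; last lia. rewrite colc_out //; lia.
by rewrite !addKn.
Qed.

Lemma graft_colc s t : forall b i x y, 1 <= i <= arity t ->
  colc b (graft t i s) x y = comp (colc b t) i (arity s) (colc true s) x y.
Proof.
have Hs := arity_gt0 s.
elim: t => [|c l IHl r IHr] b i x y Hi.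
  simpl in Hi; have Ei : i = 1 by lia. subst i.
  rewrite /= /comp /= colc_leaf. crunch.
have := arity_gt0 l; have := arity_gt0 r => Hr Hl.
simpl in Hi.
rewrite [graft _ _ _]/=. case Ei: (i <= arity l).
  rewrite [LHS]colc_node arity_graft; last lia.
  rewrite IHl; last lia.
  rewrite /comp /= !colc_node.
  crunch.
have [j Ej] : exists j, i = arity l + j by exists (i - arity l); lia.
subst i; rewrite addKn.
have Hj : 1 <= j <= arity r by lia.
case: (leqP y x) => Hxy.
  rewrite colc_out; last lia.
  rewrite comp_out //; move=> a z Haz; rewrite colc_out //; lia.
case: (leqP x (arity l)) => Hx.
  rewrite [LHS]colc_node arity_graft; last lia.
  rewrite IHr; last lia.
  rewrite /comp /= !colc_node.
  have -> : x - arity l = 0 by lia.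
  crunch.
have [x' Ex] : exists x', x = arity l + x' by exists (x - arity l); lia.
have [y' Ey] : exists y', y = arity l + y' by exists (y - arity l); lia.
subst x y.
rewrite colc_shift; last lia.
rewrite IHr // comp_shift.
apply: comp_ext; try lia.
move=> a z Ha; by rewrite colc_shift.
Qed.

Lemma colc_nr b t x y : colc b t x y = Blue \/ colc b t x y = Unc.
Proof.
elim: t b x y => [|c l IHl r IHr] b x y.
  rewrite colc_leaf; case: ifP => _; [case: b|]; by [left|right].
rewrite colc_node; case: ifP => _; first by case: b; [left|right].
by case: ifP.
Qed.

Definition phi t := BNC (arity t) (colc true t).

Lemma phi_graft t i s : 1 <= i <= arity t -> phi (graft t i s) = bcomp (phi t) i (phi s).
Proof.
move=> Hi; have Hs := arity_gt0 s.
rewrite /phi /bcomp /=; f_equal; first by rewrite arity_graft.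
apply: functional_extensionality => x; apply: functional_extensionality => y.
rewrite graft_colc // /comp /=.
rewrite (colc_base true s 1 (arity s).+1) //; last lia.
by case: (colc_nr true t i i.+1) => ->.
Qed.

Lemma phi_leaf : phi Leaf = bunit.
Proof.
unfold phi, bunit; f_equal.
Qed.

Lemma phi_tri c : phi (Node c Leaf Leaf) = triangle Blue (bc true) (bc c).
Proof.
unfold phi, triangle; f_equal.
apply: functional_extensionality => x; apply: functional_extensionality => y.
rewrite colc_node !colc_leaf /=.
repeat (split_if; try (exfalso; lia)); try reflexivity.
Qed.

Lemma phi_gen t : gen_bbb_bbu (phi t).
Proof.
elim: t => [|c l IHl r IHr]; first by rewrite phi_leaf; exact: gen_unit.
have -> : Node c l r = graft (graft (Node c Leaf Leaf) 2 r) 1 l by [].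
have Hr := arity_gt0 r.
rewrite phi_graft; last by rewrite /=; lia.
rewrite phi_graft; last by rewrite /=.
apply: gen_comp => //.
apply: gen_comp => //.
by rewrite phi_tri; case: c; [exact: gen_bbb | exact: gen_bbu].
Qed.

Lemma colc_inj t1 : forall t2 b, arity t1 = arity t2 ->
  (forall x y, colc b t1 x y = colc b t2 x y) -> t1 = t2.
Proof.
elim: t1 => [|c1 l1 IHl r1 IHr] [|c2 l2 r2] b /= Ha H //.
- have := arity_gt0 l2; have := arity_gt0 r2; lia.
- have := arity_gt0 l1; have := arity_gt0 r1; lia.
have := arity_gt0 l1; have := arity_gt0 r1 => Hr1 Hl1.
have := arity_gt0 l2; have := arity_gt0 r2 => Hr2 Hl2.
have Ek : arity l1 = arity l2.
  case: (ltngtP (arity l1) (arity l2)) => // Hk; exfalso.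
  + have := H 1 (arity l2).+1; rewrite !colc_node.
    repeat (split_if; try (exfalso; lia)).
    rewrite colc_out; last lia. rewrite colc_base //; lia.
  + have := H 1 (arity l1).+1; rewrite !colc_node.
    repeat (split_if; try (exfalso; lia)).
    rewrite [X in _ = X -> _]colc_out; last lia. rewrite colc_base //; lia.
have Er : arity r1 = arity r2 by lia.
have Ec : c1 = c2.
  have := H (arity l1).+1 (arity l1 + arity r1).+1; rewrite !colc_node.
  repeat (split_if; try (exfalso; lia)).
  rewrite colc_base; [|lia|lia]. rewrite colc_base; [|lia|lia].
  move=> Ebc; clear H; move: Ebc; by case: c1; case: c2.
move: H; rewrite -Ec => H.
have -> : l1 = l2.
  apply: (IHl l2 true Ek) => x y.
  case: (leqP y (arity l1).+1) => Hy.
    have := H x y; rewrite !colc_node.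
    repeat (split_if; try (exfalso; lia)); done.
  rewrite colc_out; last lia. rewrite colc_out //; lia.
have -> // : r1 = r2.
apply: (IHr r2 c1 Er) => x y.
case: (leqP y 1) => Hy.
  rewrite colc_out; last lia. rewrite colc_out //; lia.
case: (leqP x 0) => Hx.
  rewrite colc_out; last lia. rewrite colc_out //; lia.
have := H (x + arity l1) (y + arity l1); rewrite !colc_node.
repeat (split_if; try (exfalso; lia)).
by rewrite -Ek !addnK.
Qed.

Theorem theorem3p3 :
  exists phi : tree -> bnc,
    [/\ (forall t, bsize (phi t) = arity t),
        (forall t, gen_bbb_bbu (phi t)),
        phi Leaf = bunit
      & (forall t i s, 1 <= i <= arity t ->
           phi (graft t i s) = bcomp (phi t) i (phi s))] /\
    (forall t1 t2, phi t1 = phi t2 -> t1 = t2) /\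
    (forall C, gen_bbb_bbu C -> exists t, phi t = C).
Proof.
exists phi; split; first split.
- by [].
- exact: phi_gen.
- exact: phi_leaf.
- exact: phi_graft.
split.
- move=> t1 t2 E.
  have Ea : arity t1 = arity t2 by have := f_equal bsize E.
  apply: (@colc_inj t1 t2 true Ea) => x y.
  by have := f_equal bcol E => /= ->.
- move=> C; elim => [|||C' D i _ [t <-] _ [s <-] Hi].
  + by exists Leaf; rewrite phi_leaf.
  + by exists (Node true Leaf Leaf); rewrite phi_tri.
  + by exists (Node false Leaf Leaf); rewrite phi_tri.
  + exists (graft t i s); rewrite phi_graft //.
Qed.
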